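(* Let $n>2k$ be integers and let $A\in\mathscr F_k^5$ satisfy, for all $\alpha\in\mathscr I_{k-1}^5$, $$(n+2k-4\alpha_3-4)A_{\alpha+\vec e_3}=(n+2k-4\alpha_4-4)A_{\alpha+\vec e_4},$$ $$(n+2k-4\alpha_5-4)A_{\alpha+\vec e_5}=(n+2k-4\alpha_1-4)A_{\alpha+\vec e_1},$$ $$(n+2k-4\alpha_3-4)A_{\alpha+\vec e_3}=(n+2k-4\alpha_1-4)A_{\alpha+\vec e_1}-4(\alpha_1-\alpha_3-\alpha_4+\alpha_5)A_{\alpha+\vec e_2}.$$ Let $\alpha\in\mathscr I_k^5$ with $\alpha_4=\alpha_5$. Then $A_\alpha=A_{\alpha'}$, where $\alpha':=(\alpha_3,\alpha_2,\alpha_1,\alpha_5,\alpha_4)$.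
   Context: Notation: $\mathscr I_k^\ell:=\{\alpha\in\mathbb N_0^\ell:\alpha_1+\cdots+\alpha_\ell=k\}$; $\mathscr F_k^\ell$ is the real vector space of functions $A:\mathscr I_k^\ell\to\mathbb R$, $A_\alpha:=A(\alpha)$; $\vec e_j\in\mathbb N_0^\ell$ is the tuple with $1$ in slot $j$ and $0$ elsewhere. *)

(* Defs.v *)
From Stdlib Require Import Reals.
Open Scope R_scope.

(* A multi-index alpha in N_0^5 is represented by its five components;
   an element A of F_k^5 is represented by a function of five naturals
   A a1 a2 a3 a4 a5 : R, of which only the values on I_k^5
   (a1+...+a5 = k) are ever used. *)
Definition F5 := nat -> nat -> nat -> nat -> nat -> R.

Definition coef (n k a : nat) : R :=
  INR n + 2 * INR k - 4 * INR a - 4.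

(* Main.v *)
Require Import Defs.
From Stdlib Require Import Reals Lra Lia.
Open Scope R_scope.

Section S.
Variables (n k : nat) (A : F5).
Hypothesis Hn : (2 * k < n)%nat.
Hypothesis HR : forall a1 a2 a3 a4 a5 : nat, (a1 + a2 + a3 + a4 + a5 + 1 = k)%nat ->
     coef n k a3 * A a1 a2 (S a3) a4 a5 = coef n k a4 * A a1 a2 a3 (S a4) a5 /\
     coef n k a5 * A a1 a2 a3 a4 (S a5) = coef n k a1 * A (S a1) a2 a3 a4 a5 /\
     coef n k a3 * A a1 a2 (S a3) a4 a5 =
       coef n k a1 * A (S a1) a2 a3 a4 a5
       - 4 * (INR a1 - INR a3 - INR a4 + INR a5) * A a1 (S a2) a3 a4 a5.

Lemma c_pos a : (a < k)%nat -> 0 < coef n k a.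
Proof.
  intro Ha. assert (H: (4*a+4 < n+2*k)%nat) by lia. apply lt_INR in H.
  rewrite !plus_INR, !mult_INR in H. unfold coef.
  replace (INR 4) with 4 in H by (simpl; ring).
  replace (INR 2) with 2 in H by (simpl; ring). lra.
Qed.

Fixpoint hh (a : nat) : R := match a with 0%nat => 1 | S b => hh b / coef n k b end.

Lemma hh_pos a : (a <= k)%nat -> 0 < hh a.
Proof.
  induction a; intro Ha; simpl. lra.
  apply Rdiv_lt_0_compat. apply IHa; lia. apply c_pos; lia.
Qed.

Definition D a1 a2 a3 a4 a5 :=
  A a1 a2 a3 a4 a5 / (hh a1 * hh a2 * hh a3 * hh a4 * hh a5).

Ltac prep b1 b2 b3 b4 b5 :=
  assert (h1 := hh_pos b1 ltac:(lia)); assert (h2 := hh_pos b2 ltac:(lia));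
  assert (h3 := hh_pos b3 ltac:(lia)); assert (h4 := hh_pos b4 ltac:(lia));
  assert (h5 := hh_pos b5 ltac:(lia)).

Lemma R1 b1 b2 b3 b4 b5 : (b1 + b2 + b3 + b4 + b5 + 1 = k)%nat ->
  D b1 b2 (S b3) b4 b5 = D b1 b2 b3 (S b4) b5.
Proof.
  intro Hs. destruct (HR _ _ _ _ _ Hs) as [E1 [E2 E3]].
  prep b1 b2 b3 b4 b5.
  assert (c3 := c_pos b3 ltac:(lia)). assert (c4 := c_pos b4 ltac:(lia)).
  unfold D; simpl hh.
  replace (A b1 b2 (S b3) b4 b5 / (hh b1 * hh b2 * (hh b3 / coef n k b3) * hh b4 * hh b5))
    with (coef n k b3 * A b1 b2 (S b3) b4 b5 / (hh b1 * hh b2 * hh b3 * hh b4 * hh b5))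
    by (field; repeat split; lra).
  replace (A b1 b2 b3 (S b4) b5 / (hh b1 * hh b2 * hh b3 * (hh b4 / coef n k b4) * hh b5))
    with (coef n k b4 * A b1 b2 b3 (S b4) b5 / (hh b1 * hh b2 * hh b3 * hh b4 * hh b5))
    by (field; repeat split; lra).
  rewrite E1. reflexivity.
Qed.

Lemma R2 b1 b2 b3 b4 b5 : (b1 + b2 + b3 + b4 + b5 + 1 = k)%nat ->
  D b1 b2 b3 b4 (S b5) = D (S b1) b2 b3 b4 b5.
Proof.
  intro Hs. destruct (HR _ _ _ _ _ Hs) as [E1 [E2 E3]].
  prep b1 b2 b3 b4 b5.
  assert (c1 := c_pos b1 ltac:(lia)). assert (c5 := c_pos b5 ltac:(lia)).
  unfold D; simpl hh.
  replace (A b1 b2 b3 b4 (S b5) / (hh b1 * hh b2 * hh b3 * hh b4 * (hh b5 / coef n k b5)))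
    with (coef n k b5 * A b1 b2 b3 b4 (S b5) / (hh b1 * hh b2 * hh b3 * hh b4 * hh b5))
    by (field; repeat split; lra).
  replace (A (S b1) b2 b3 b4 b5 / (hh b1 / coef n k b1 * hh b2 * hh b3 * hh b4 * hh b5))
    with (coef n k b1 * A (S b1) b2 b3 b4 b5 / (hh b1 * hh b2 * hh b3 * hh b4 * hh b5))
    by (field; repeat split; lra).
  rewrite E2. reflexivity.
Qed.

Lemma R3 b1 b2 b3 b4 b5 : (b1 + b2 + b3 + b4 + b5 + 1 = k)%nat ->
  D b1 b2 (S b3) b4 b5 = D (S b1) b2 b3 b4 b5
    - 4 * (INR b1 - INR b3 - INR b4 + INR b5) / coef n k b2 * D b1 (S b2) b3 b4 b5.
Proof.
  intro Hs. destruct (HR _ _ _ _ _ Hs) as [E1 [E2 E3]].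
  prep b1 b2 b3 b4 b5.
  assert (c1 := c_pos b1 ltac:(lia)). assert (c3 := c_pos b3 ltac:(lia)).
  assert (c2 := c_pos b2 ltac:(lia)).
  unfold D; simpl hh.
  replace (A b1 b2 (S b3) b4 b5 / (hh b1 * hh b2 * (hh b3 / coef n k b3) * hh b4 * hh b5))
    with (coef n k b3 * A b1 b2 (S b3) b4 b5 / (hh b1 * hh b2 * hh b3 * hh b4 * hh b5))
    by (field; repeat split; lra).
  rewrite E3. field; repeat split; lra.
Qed.

Definition E a1 a2 a3 a4 a5 := D a1 a2 a3 a4 a5 - D a3 a2 a1 a5 a4.

Lemma step m : (m < k)%nat ->
  (forall a1 a3 a4 a5, (a1 + S m + a3 + a4 + a5 = k)%nat -> E a1 (S m) a3 a4 a5 = 0) ->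
  forall a1 a3 a4 a5, (a1 + m + a3 + a4 + a5 = k)%nat -> E a1 m a3 a4 a5 = 0.
Proof.
  intros Hm IH.
  assert (M1 : forall b1 b3 b4 b5, (b1 + m + b3 + b4 + b5 + 1 = k)%nat ->
     E b1 m (S b3) b4 b5 = E b1 m b3 (S b4) b5).
  { intros. unfold E. rewrite (R1 b1 m b3 b4 b5) by lia.
    rewrite (R2 b3 m b1 b5 b4) by lia. reflexivity. }
  assert (M2 : forall b1 b3 b4 b5, (b1 + m + b3 + b4 + b5 + 1 = k)%nat ->
     E b1 m b3 b4 (S b5) = E (S b1) m b3 b4 b5).
  { intros. unfold E. rewrite (R2 b1 m b3 b4 b5) by lia.
    rewrite (R1 b3 m b1 b5 b4) by lia. reflexivity. }
  assert (M3 : forall b1 b3 b4 b5, (b1 + m + b3 + b4 + b5 + 1 = k)%nat ->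
     E b1 m (S b3) b4 b5 = E (S b1) m b3 b4 b5).
  { intros. unfold E. rewrite (R3 b1 m b3 b4 b5) by lia.
    rewrite (R3 b3 m b1 b5 b4) by lia.
    assert (X := IH b1 b3 b4 b5 ltac:(lia)). unfold E in X.
    assert (c2 := c_pos m Hm).
    replace (D b3 (S m) b1 b5 b4) with (D b1 (S m) b3 b4 b5) by lra.
    field. lra. }
  assert (C : forall a1 a3 a4 a5, (a1 + m + a3 + a4 + a5 = k)%nat ->
     E a1 m a3 a4 a5 = E (a1 + a3 + a4 + a5) m 0 0 0).
  { intros a1 a3 a4 a5.
    revert a1 a3 a4; induction a5; intros a1 a3 a4 Hs.
    2:{ rewrite M2 by lia. rewrite IHa5 by lia. f_equal; lia. }
    revert a1 a3 Hs; induction a4; intros a1 a3 Hs.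
    2:{ rewrite <- M1 by lia. rewrite IHa4 by lia. f_equal; lia. }
    revert a1 Hs; induction a3; intros a1 Hs.
    2:{ rewrite M3 by lia. rewrite IHa3 by lia. f_equal; lia. }
    f_equal; lia. }
  intros a1 a3 a4 a5 Hs.
  assert (X1 := C a1 a3 a4 a5 Hs). assert (X2 := C a3 a1 a5 a4 ltac:(lia)).
  replace (a3 + a1 + a5 + a4)%nat with (a1 + a3 + a4 + a5)%nat in X2 by lia.
  unfold E in X1, X2 |- *. lra.
Qed.

Lemma allE : forall j m, (m + j = k)%nat ->
  forall a1 a3 a4 a5, (a1 + m + a3 + a4 + a5 = k)%nat -> E a1 m a3 a4 a5 = 0.
Proof.
  induction j; intros m Hm a1 a3 a4 a5 Hs.
  - assert (a1 = 0 /\ a3 = 0 /\ a4 = 0 /\ a5 = 0)%nat as [-> [-> [-> ->]]] by lia.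
    unfold E; ring.
  - apply step; [lia| |lia]. apply IHj. lia.
Qed.

End S.

Theorem lemma4p3 (n k : nat) (A : F5) :
  (2 * k < n)%nat ->
  (forall a1 a2 a3 a4 a5 : nat, (a1 + a2 + a3 + a4 + a5 + 1 = k)%nat ->
     coef n k a3 * A a1 a2 (S a3) a4 a5 = coef n k a4 * A a1 a2 a3 (S a4) a5 /\
     coef n k a5 * A a1 a2 a3 a4 (S a5) = coef n k a1 * A (S a1) a2 a3 a4 a5 /\
     coef n k a3 * A a1 a2 (S a3) a4 a5 =
       coef n k a1 * A (S a1) a2 a3 a4 a5
       - 4 * (INR a1 - INR a3 - INR a4 + INR a5) * A a1 (S a2) a3 a4 a5) ->
  forall a1 a2 a3 a4 a5 : nat, (a1 + a2 + a3 + a4 + a5 = k)%nat -> a4 = a5 ->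
    A a1 a2 a3 a4 a5 = A a3 a2 a1 a5 a4.
Proof.
  intros Hn HR a1 a2 a3 a4 a5 Hs _.
  assert (X := allE n k A Hn HR (k - a2) a2 ltac:(lia) a1 a3 a4 a5 ltac:(lia)).
  unfold E, D in X.
  assert (h1 := hh_pos n k Hn a1 ltac:(lia)). assert (h2 := hh_pos n k Hn a2 ltac:(lia)).
  assert (h3 := hh_pos n k Hn a3 ltac:(lia)). assert (h4 := hh_pos n k Hn a4 ltac:(lia)).
  assert (h5 := hh_pos n k Hn a5 ltac:(lia)).
  replace (hh n k a3 * hh n k a2 * hh n k a1 * hh n k a5 * hh n k a4)
    with (hh n k a1 * hh n k a2 * hh n k a3 * hh n k a4 * hh n k a5) in X by ring.
  set (P := hh n k a1 * hh n k a2 * hh n k a3 * hh n k a4 * hh n k a5) in X.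
  assert (0 < P) by (unfold P; repeat apply Rmult_lt_0_compat; lra).
  apply (Rmult_eq_reg_r (/ P)). 2: apply Rinv_neq_0_compat; lra.
  unfold Rdiv in X. lra.
Qed.
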